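(* Let $f: (\mathbb{R}^{+})^n \to (\mathbb{R}^{+})^n$ be homogeneous and monotone. If the associated graph $\mathcal{G}(f)$ is strongly connected, then $f$ has an eigenvector in $(\mathbb{R}^{+})^n$, i.e. there exist $x \in (\mathbb{R}^{+})^n$ and $\lambda \in \mathbb{R}^{+}$ with $f(x) = \lambda x$.
   Context: $\mathbb{R}^{+} = \{x \in \mathbb{R} : x > 0\}$. A map $f: (\mathbb{R}^{+})^n \to (\mathbb{R}^{+})^n$ is homogeneous if $f(\lambda x) = \lambda f(x)$ for all $\lambda \in \mathbb{R}^{+}$, $x \in (\mathbb{R}^{+})^n$, and monotone if $x \le y$ (componentwise) implies $f(x) \le f(y)$. For $u \in \mathbb{R}^{+}$ and $J \subseteq \{1,\dots,n\}$, $u_J \in (\mathbb{R}^{+})^n$ is the vector with $(u_J)_i = u$ if $i \in J$ and $(u_J)_i = 1$ otherwise. The associated graph $\mathcal{G}(f)$ is the directed graph on vertices $1,\dots,n$ with an edge from $i$ to $j$ iff $\lim_{u \to \infty} f_i(u_{\{j\}}) = \infty$. A directed graph is strongly connected if there is a directed path between any two distinct vertices. *)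

(* Defs.v *)
From mathcomp Require Import all_boot.
From Stdlib Require Import Reals.
Set Implicit Arguments.
Unset Strict Implicit.
Open Scope R_scope.

Definition pos_vec (n : nat) (x : 'I_n -> R) : Prop := forall i, 0 < x i.

(* f maps (R^+)^n to (R^+)^n; f is given as a total function whose behaviour
   outside the positive orthant is irrelevant *)
Definition maps_pos (n : nat) (f : ('I_n -> R) -> ('I_n -> R)) : Prop :=
  forall x, pos_vec x -> pos_vec (f x).

Definition homogeneous (n : nat) (f : ('I_n -> R) -> ('I_n -> R)) : Prop :=
  forall (lam : R) (x : 'I_n -> R), 0 < lam -> pos_vec x ->
    forall i, f (fun j => lam * x j) i = lam * f x i.

Definition monotone (n : nat) (f : ('I_n -> R) -> ('I_n -> R)) : Prop :=
  forall x y : 'I_n -> R, pos_vec x -> pos_vec y ->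
    (forall i, x i <= y i) -> forall i, f x i <= f y i.

Definition u_single (n : nat) (u : R) (j : 'I_n) : 'I_n -> R :=
  fun k => if k == j then u else 1.

Definition graph_edge (n : nat) (f : ('I_n -> R) -> ('I_n -> R)) (i j : 'I_n) : Prop :=
  forall M : R, exists U : R, forall u : R, U < u ->
    M < f (u_single u j) i.

Inductive dpath (n : nat) (E : 'I_n -> 'I_n -> Prop) : 'I_n -> 'I_n -> Prop :=
  | dpath_edge i j : E i j -> dpath E i j
  | dpath_step i k j : E i k -> dpath E k j -> dpath E i j.

Definition strongly_connected (n : nat) (E : 'I_n -> 'I_n -> Prop) : Prop :=
  forall i j : 'I_n, i <> j -> dpath E i j.

(* Main.v *)
Require Import Defs.
From mathcomp Require Import all_boot.
From Stdlib Require Import Reals.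
From Stdlib Require Import Lra Psatz FunctionalExtensionality ClassicalEpsilon Classical.
Open Scope R_scope.

Lemma fchoice {A B : Type} (P : A -> B -> Prop) :
  (forall a, exists b, P a b) -> exists g, forall a, P a (g a).
Proof.
intros H. exists (fun a => proj1_sig (constructive_indefinite_description _ (H a))).
intros a. exact (proj2_sig (constructive_indefinite_description _ (H a))).
Qed.

Lemma fin_swap (T : finType) (A : Type) (a0 : A) (join : A -> A -> A) (P : T -> A -> Prop) :
  (forall t a b, P t a -> P t (join a b)) -> (forall t a b, P t b -> P t (join a b)) ->
  (forall t, exists a, P t a) -> exists a, forall t, P t a.
Proof.
intros Hl Hr H.
assert (H0 : forall l : seq T, exists a, forall t, t \in l -> P t a).
{ elim=> [|h l [a Ha]].
  - exists a0; by [].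
  - destruct (H h) as [b Hb]. exists (join a b). intros t; rewrite in_cons => /orP [/eqP -> | Ht].
    + apply Hr, Hb.
    + apply Hl, Ha, Ht. }
destruct (H0 (enum T)) as [a Ha]. exists a => t. apply Ha. by rewrite mem_enum.
Qed.

Lemma argmin_ex n (i0 : 'I_n) (x : 'I_n -> R) : exists a, forall k, x a <= x k.
Proof.
assert (H0 : forall l : seq 'I_n, exists a, forall k, k \in l -> x a <= x k).
{ elim=> [|h l [a Ha]].
  - exists i0; by [].
  - destruct (Rle_or_lt (x h) (x a)) as [Hh|Hh].
    + exists h. intros k; rewrite in_cons => /orP [/eqP -> | Hk]. lra. specialize (Ha k Hk); lra.
    + exists a. intros k; rewrite in_cons => /orP [/eqP -> | Hk]. lra. auto. }
destruct (H0 (enum 'I_n)) as [a Ha]. exists a => k. apply Ha. by rewrite mem_enum.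
Qed.

Lemma glb_ex (E : R -> Prop) (b : R) : (forall x, E x -> b <= x) -> (exists x, E x) ->
  exists m, (forall x, E x -> m <= x) /\ (forall l, (forall x, E x -> l <= x) -> l <= m).
Proof.
intros Hb [x0 Hx0].
destruct (completeness (fun r => E (- r))) as [M [HM1 HM2]].
{ exists (- b). intros r Hr. specialize (Hb _ Hr). lra. }
{ exists (- x0). rewrite Ropp_involutive. exact Hx0. }
exists (- M). split.
- intros x Hx. assert (x <= - M \/ - M < x) as [|] by lra; [|lra].
  assert (- x <= M). { apply HM1. rewrite Ropp_involutive. exact Hx. } lra.
- intros l Hl. assert (M <= - l). { apply HM2. intros r Hr. specialize (Hl _ Hr). lra. } lra.
Qed.

Lemma dec_conv n (y : nat -> 'I_n -> R) (b : R) :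
  (forall m k, y (S m) k <= y m k) -> (forall m k, b <= y m k) ->
  exists L : 'I_n -> R, (forall m k, L k <= y m k) /\
    (forall k l, (forall m, l <= y m k) -> l <= L k) /\
    (forall eps, 0 < eps -> exists N : nat, forall m : nat, leq N m -> forall k, y m k <= L k + eps).
Proof.
intros Hdec Hb.
assert (Hmon : forall m m', leq m m' -> forall k, y m' k <= y m k).
{ intros m m' Hmm'. rewrite -(subnK Hmm'). elim: (subn m' m) => [|d IH] k.
  - rewrite add0n; lra.
  - rewrite addSn. specialize (IH k). specialize (Hdec (addn d m) k). lra. }
destruct (fchoice (fun k Lk => (forall m, Lk <= y m k) /\ (forall l, (forall m, l <= y m k) -> l <= Lk))) as [L HL].
{ intros k. destruct (glb_ex (fun r => exists m, r = y m k) b) as [Lk [H1 H2]].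
  - intros r [m ->]. apply Hb.
  - exists (y O k). exists O. reflexivity.
  - exists Lk. split.
    + intros m. apply H1. exists m; reflexivity.
    + intros l Hl. apply H2. intros r [m ->]. apply Hl. }
exists L. split; [intros m k; apply (proj1 (HL k))|split; [intros k; apply (proj2 (HL k))|]].
intros eps Heps.
enough (HH : exists N : nat, forall k m, leq N m -> y m k <= L k + eps).
{ destruct HH as [N HN]. exists N. intros m Hm k. apply HN, Hm. }
apply (@fin_swap _ _ O maxn (fun k N => forall m, leq N m -> y m k <= L k + eps)).
- intros k a c Ha m Hm. apply Ha. exact (leq_trans (leq_maxl a c) Hm).
- intros k a c Ha m Hm. apply Ha. exact (leq_trans (leq_maxr a c) Hm).
- intros k. destruct (classic (exists m, y m k < L k + eps)) as [[m Hm]|Hno].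
  + exists m. intros m' Hm'. specialize (Hmon m m' Hm' k). lra.
  + exfalso. assert (L k + eps <= L k); [|lra].
    apply (proj2 (HL k)). intros m. apply Rnot_lt_le. intros Hc. apply Hno. exists m. exact Hc.
Qed.

Lemma lemA (a b : R) : (forall eps, 0 < eps -> a <= (1 + eps) * b) -> 0 <= b -> a <= b.
Proof.
intros H Hb. apply Rnot_lt_le. intros Hlt.
destruct (Req_dec b 0) as [->|Hb0].
- specialize (H 1 Rlt_0_1). lra.
- assert (Hbp : 0 < b) by lra.
  specialize (H ((a - b) / (2 * b))).
  assert (Hp : 0 < (a - b) / (2 * b)). { apply Rdiv_lt_0_compat; lra. }
  specialize (H Hp).
  assert ((1 + (a - b) / (2 * b)) * b = b + (a - b) / 2) by (field; lra). lra.
Qed.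

Lemma lemB (a b c : R) : (forall m : nat, a <= b + c / INR (S m)) -> 0 <= c -> a <= b.
Proof.
intros H Hc. apply Rnot_lt_le. intros Hlt.
destruct (Req_dec c 0) as [->|Hc0].
- specialize (H O). unfold Rdiv in H. rewrite Rmult_0_l in H. lra.
- assert (Hcp : 0 < c) by lra.
  destruct (archimed_cor1 ((a - b) / c)) as [N [HN1 HN2]].
  { apply Rdiv_lt_0_compat; lra. }
  destruct N as [|N]; [inversion HN2|].
  specialize (H N).
  assert (HNp : 0 < INR (S N)) by (apply lt_0_INR; apply/ltP; done).
  assert (c / INR (S N) < a - b).
  { apply (Rmult_lt_reg_r (/ c)). apply Rinv_0_lt_compat; lra.
    replace (c / INR (S N) * / c) with (/ INR (S N)) by (field; lra).
    replace ((a - b) * / c) with ((a - b) / c) by reflexivity. exact HN1. }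
  lra.
Qed.

Lemma bernoulli (t : R) (m : nat) : 0 <= t <= 1 -> 1 - INR m * t <= (1 - t) ^ m.
Proof.
intros Ht. induction m as [|m IH].
- simpl. lra.
- rewrite S_INR. simpl.
  assert (0 <= INR m) by apply pos_INR.
  assert (0 <= (1 - t) ^ m) by (apply pow_le; lra).
  nra.
Qed.

Set Implicit Arguments.
Unset Strict Implicit.

Definition super n (f : ('I_n -> R) -> ('I_n -> R)) (mu : R) (x : 'I_n -> R) :=
  pos_vec x /\ forall i, f x i <= mu * x i.
Arguments super {n}.

Lemma edge_bound n (f : ('I_n -> R) -> ('I_n -> R)) (mu0 : R) i j :
  homogeneous f -> monotone f -> graph_edge f i j -> 0 <= mu0 ->
  forall B, exists C, forall x m, super f mu0 x -> 0 < m -> (forall k, m <= x k) ->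
    x i <= B * m -> x j <= C * m.
Proof.
intros Hh Hm He Hmu B.
destruct (He (mu0 * B)) as [U HU].
exists (Rmax U 1). intros x m [Hx Hfx] Hm0 Hmx Hxi.
apply Rnot_lt_le. intros Hlt.
set u := x j / m.
assert (HU1 : U <= Rmax U 1) by apply Rmax_l.
assert (HU2 : 1 <= Rmax U 1) by apply Rmax_r.
assert (Hxj : x j = m * u) by (unfold u; field; lra).
assert (Hu : U < u).
{ apply (Rmult_lt_reg_l m); [lra|]. rewrite -Hxj. nra. }
assert (Hu1 : 1 < u).
{ apply (Rmult_lt_reg_l m); [lra|]. rewrite -Hxj. nra. }
set v := u_single u j.
assert (Hv : pos_vec v).
{ intros k. unfold v, u_single. case: (k == j); lra. }
assert (Hvx : forall k, m * v k <= x k).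
{ intros k. unfold v, u_single. case: eqP => [->|_]; [lra|]. rewrite Rmult_1_r. apply Hmx. }
assert (Hmv : pos_vec (fun k => m * v k)).
{ intros k. specialize (Hv k). nra. }
have H1 := Hm _ _ Hmv Hx Hvx i.
rewrite (Hh m v Hm0 Hv i) in H1.
have H2 := HU u Hu.
have H3 := Hfx i.
assert (mu0 * x i <= mu0 * (B * m)) by (apply Rmult_le_compat_l; lra).
assert (m * (mu0 * B) < m * f v i) by (apply Rmult_lt_compat_l; [lra| exact H2]).
nra.
Qed.

Lemma path_bound n (f : ('I_n -> R) -> ('I_n -> R)) (mu0 : R) a j :
  homogeneous f -> monotone f -> 0 <= mu0 -> dpath (graph_edge f) a j ->
  forall B, exists C, forall x m, super f mu0 x -> 0 < m -> (forall k, m <= x k) ->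
    x a <= B * m -> x j <= C * m.
Proof.
intros Hh Hm Hmu Hp. induction Hp as [i j He|i k j He Hp IH]; intros B.
- exact (edge_bound Hh Hm He Hmu B).
- destruct (edge_bound Hh Hm He Hmu B) as [C1 HC1].
  destruct (IH C1) as [C2 HC2].
  exists C2. intros x m Hs Hm0 Hmx Hxa. apply (HC2 x m Hs Hm0 Hmx). apply (HC1 x m Hs Hm0 Hmx Hxa).
Qed.

Lemma hilbert n (f : ('I_n -> R) -> ('I_n -> R)) (mu0 : R) (i0 : 'I_n) :
  homogeneous f -> monotone f -> strongly_connected (graph_edge f) -> 0 <= mu0 ->
  exists C, 1 <= C /\ forall x, super f mu0 x -> forall j k, x j <= C * x k.
Proof.
intros Hh Hm Hsc Hmu.
destruct (@fin_swap _ _ 1 Rmax (fun (p : 'I_n * 'I_n) C => forall x m, super f mu0 x -> 0 < m ->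
   (forall k, m <= x k) -> x p.1 <= m -> x p.2 <= C * m)) as [C HC].
- intros p a b Ha x m Hs Hm0 Hmx Hx. specialize (Ha x m Hs Hm0 Hmx Hx).
  assert (a <= Rmax a b) by apply Rmax_l. nra.
- intros p a b Ha x m Hs Hm0 Hmx Hx. specialize (Ha x m Hs Hm0 Hmx Hx).
  assert (b <= Rmax a b) by apply Rmax_r. nra.
- intros [a j]. simpl. destruct (eqVneq a j) as [->|Hne].
  + exists 1. intros x m _ _ _ Hx. lra.
  + destruct (path_bound Hh Hm Hmu (Hsc a j (elimN eqP Hne)) 1) as [C HC].
    exists C. intros x m Hs Hm0 Hmx Hx. apply (HC x m Hs Hm0 Hmx). lra.
- exists (Rmax C 1). split; [apply Rmax_r|].
  intros x Hs j k.
  destruct (argmin_ex _ i0 x) as [a Ha].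
  assert (Hxa : 0 < x a) by apply (proj1 Hs).
  specialize (HC (a, j) x (x a) Hs Hxa Ha (Rle_refl _)). simpl in HC.
  assert (HC1 : C <= Rmax C 1) by apply Rmax_l.
  specialize (Ha k). assert (0 < C) by (apply (Rmult_lt_reg_r (x a)); [exact Hxa| ]; have := proj1 Hs j; lra).
  apply (Rle_trans _ _ _ HC). apply Rmult_le_compat; lra.
Qed.

Definition Gdiv n (f : ('I_n -> R) -> ('I_n -> R)) (a : R) : ('I_n -> R) -> ('I_n -> R) :=
  fun x i => f x i / a.

Lemma iter_pos n (f : ('I_n -> R) -> ('I_n -> R)) a x m :
  maps_pos f -> 0 < a -> pos_vec x -> pos_vec (Nat.iter m (Gdiv f a) x).
Proof.
intros Hp Ha Hx. induction m as [|m IH]; [exact Hx|].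
intros i. simpl. unfold Gdiv. apply Rdiv_lt_0_compat; [apply Hp, IH|exact Ha].
Qed.

Lemma iter_rel n (f : ('I_n -> R) -> ('I_n -> R)) a b x m :
  maps_pos f -> homogeneous f -> 0 < a -> 0 < b -> pos_vec x ->
  forall i, Nat.iter m (Gdiv f b) x i = (a / b) ^ m * Nat.iter m (Gdiv f a) x i.
Proof.
intros Hp Hh Ha Hb Hx. induction m as [|m IH]; intros i.
- simpl. ring.
- simpl. unfold Gdiv at 1 3.
  rewrite (functional_extensionality _ _ IH).
  have Hc : 0 < (a / b) ^ m by (apply pow_lt; apply Rdiv_lt_0_compat; lra).
  rewrite (Hh _ _ Hc (iter_pos m Hp Ha Hx) i).
  field. lra.
Qed.

Fixpoint mvec n (v : nat -> 'I_n -> R) (k : nat) : 'I_n -> R :=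
  match k with
  | O => v O
  | S k => fun i => Rmin (mvec v k i) (v (S k) i)
  end.

Lemma mvec_le n (v : nat -> 'I_n -> R) k j i : leq j k -> mvec v k i <= v j i.
Proof.
elim: k j => [|k IH] j Hj.
- rewrite leqn0 in Hj. move/eqP: Hj => ->. simpl; lra.
- simpl. rewrite leq_eqVlt in Hj. case/orP: Hj => [/eqP ->|Hj].
  + apply Rmin_r.
  + apply (Rle_trans _ _ _ (Rmin_l _ _)). apply IH. exact Hj.
Qed.

Lemma mvec_glb n (v : nat -> 'I_n -> R) k i w :
  (forall j, leq j k -> w <= v j i) -> w <= mvec v k i.
Proof.
elim: k => [|k IH] H.
- simpl. apply H. done.
- simpl. apply Rmin_glb.
  + apply IH. intros j Hj. apply H. exact (leq_trans Hj (leqnSn k)).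
  + apply H. done.
Qed.

Lemma mvec_pos n (v : nat -> 'I_n -> R) k : (forall j, pos_vec (v j)) -> pos_vec (mvec v k).
Proof.
intros Hv. elim: k => [|k IH] i; simpl.
- apply Hv.
- apply Rmin_pos; [apply IH|apply Hv].
Qed.

Lemma multistep n (f : ('I_n -> R) -> ('I_n -> R)) mu x K :
  maps_pos f -> homogeneous f -> monotone f -> 0 < mu -> pos_vec x ->
  (forall i, Nat.iter (S K) (Gdiv f mu) x i <= x i) -> exists y, super f mu y.
Proof.
intros Hp Hh Hm Hmu Hx HK.
set v := fun j => Nat.iter j (Gdiv f mu) x.
have Hv : forall j, pos_vec (v j) by (intros j; apply iter_pos).
have Hvs : forall j i, f (v j) i = mu * v (S j) i.
{ intros j i. unfold v. simpl. unfold Gdiv. field. lra. }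
exists (mvec v K). split; [apply mvec_pos, Hv|].
have Hy := mvec_pos K Hv.
have Hle : forall j, leq j K -> forall i, f (mvec v K) i <= mu * v (S j) i.
{ intros j Hj i. rewrite -Hvs. apply Hm; [exact Hy|apply Hv|]. intros k. apply mvec_le, Hj. }
intros i.
enough (f (mvec v K) i / mu <= mvec v K i).
{ apply (Rmult_le_reg_r (/ mu)). apply Rinv_0_lt_compat; lra.
  replace (mu * mvec v K i * / mu) with (mvec v K i) by (field; lra). exact H. }
apply mvec_glb. intros j Hj.
destruct j as [|j].
- have H1 := Hle K (leqnn K) i. have H2 : v (S K) i <= x i := HK i.
  apply (Rmult_le_reg_r mu); [lra|]. replace (f (mvec v K) i / mu * mu) with (f (mvec v K) i) by (field; lra).
  change (v O i) with (x i).
  assert (mu * v (S K) i <= mu * x i) by (apply Rmult_le_compat_l; lra). lra.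
- have H1 := Hle j (leq_trans (leqnSn j) Hj) i.
  apply (Rmult_le_reg_r mu); [lra|]. replace (f (mvec v K) i / mu * mu) with (f (mvec v K) i) by (field; lra).
  lra.
Qed.

Lemma super_mono n (f : ('I_n -> R) -> ('I_n -> R)) a b x :
  super f a x -> a <= b -> super f b x.
Proof.
intros [Hx Hf] Hab. split; [exact Hx|]. intros i. specialize (Hf i). specialize (Hx i). nra.
Qed.

Lemma main n (f : ('I_n -> R) -> ('I_n -> R)) (i0 : 'I_n) :
  maps_pos f -> homogeneous f -> monotone f ->
  strongly_connected (graph_edge f) ->
  exists (x : 'I_n -> R) (lam : R),
    pos_vec x /\ 0 < lam /\ forall i, f x i = lam * x i.
Proof.
intros Hp Hh Hm Hsc.
set Lam := fun mu => 0 < mu /\ exists x, super f mu x.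
have [M HM] : exists M, forall i, f (fun _ => 1) i <= M.
{ apply (@fin_swap _ _ 0 Rmax (fun i M => f (fun _ => 1) i <= M)).
  - intros t a b H. have := Rmax_l a b. lra.
  - intros t a b H. have := Rmax_r a b. lra.
  - intros t. exists (f (fun _ => 1) t). lra. }
have Hone : pos_vec (fun _ : 'I_n => 1) by (intros i; lra).
destruct (glb_ex Lam 0) as [lam [Hlam1 Hlam2]].
{ intros mu [H _]; lra. }
{ exists (Rmax M 1). split. have := Rmax_r M 1. lra.
  exists (fun _ => 1). split; [exact Hone|]. intros i. have := Rmax_l M 1. have := HM i. lra. }
have Hlam0 : 0 <= lam.
{ apply Hlam2. intros mu [H _]. lra. }
set mu0 := lam + 1.
destruct (hilbert i0 Hh Hm Hsc (ltac:(unfold mu0; lra) : 0 <= mu0)) as [C [HC1 HC]].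
set mu := fun m : nat => lam + / INR (S m).
have HINR : forall m, 1 <= INR (S m).
{ intros m. rewrite S_INR. have := pos_INR m. lra. }
have Hinv : forall m, 0 < / INR (S m) <= 1.
{ intros m. have := HINR m. intros H. split. apply Rinv_0_lt_compat; lra.
  rewrite -Rinv_1. apply Rinv_le_contravar; lra. }
have Hmu1 : forall m, lam < mu m by (intros m; have := Hinv m; unfold mu; lra).
have Hmu2 : forall m, mu m <= mu0 by (intros m; have := Hinv m; unfold mu, mu0; lra).
have Hmu3 : forall m m', leq m m' -> mu m' <= mu m.
{ intros m m' Hmm. unfold mu. have := HINR m. intros H1.
  assert (INR (S m) <= INR (S m')) by (apply le_INR; apply/leP; exact Hmm).
  have : / INR (S m') <= / INR (S m) by (apply Rinv_le_contravar; lra). lra. }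
have HexS : forall m, exists x, super f (mu m) x.
{ intros m. apply NNPP. intros Hno.
  assert (mu m <= lam); [|have := Hmu1 m; lra].
  apply Hlam2. intros mu' [Hmu' [x Hx]].
  apply Rnot_lt_le. intros Hlt. apply Hno. exists x. apply (super_mono Hx). lra. }
set Sm := fun m x => super f (mu m) x /\ x i0 = 1.
have HSne : forall m, exists x, Sm m x.
{ intros m. destruct (HexS m) as [x [Hx Hfx]].
  have Hx0 := Hx i0.
  exists (fun j => / x i0 * x j). split; [split|].
  - intros j. have := Hx j. have : 0 < / x i0 by apply Rinv_0_lt_compat. nra.
  - intros i. rewrite (Hh _ _ (Rinv_0_lt_compat _ Hx0) Hx i).
    have := Hfx i. have : 0 < / x i0 by apply Rinv_0_lt_compat. nra.
  - simpl. field. lra. }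
have HSlow : forall m x, Sm m x -> forall k, / C <= x k.
{ intros m x [Hs Hx1] k. have Hs0 := super_mono Hs (Hmu2 m).
  have := HC x Hs0 i0 k. rewrite Hx1. intros H.
  have : 0 < / C by (apply Rinv_0_lt_compat; lra).
  replace (x k) with (/ C * (C * x k)) by (field; lra).
  intros Hc. have := Rmult_le_compat_l (/ C) 1 (C * x k) (Rlt_le _ _ Hc) H. lra. }
destruct (fchoice (fun m (zm : 'I_n -> R) => forall k, (forall x, Sm m x -> zm k <= x k) /\
   (forall l, (forall x, Sm m x -> l <= x k) -> l <= zm k))) as [z Hz].
{ intros m. apply (fchoice (fun k zk => (forall x, Sm m x -> zk <= x k) /\ (forall l, (forall x, Sm m x -> l <= x k) -> l <= zk))). intros k.
  destruct (glb_ex (fun r => exists x, Sm m x /\ r = x k) (/ C)) as [zk [H1 H2]].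
  - intros r [x [Hx ->]]. exact (HSlow m x Hx k).
  - destruct (HSne m) as [x Hx]. exists (x k). exists x. split; [exact Hx|reflexivity].
  - exists zk. split.
    + intros x Hx. apply H1. exists x. split; [exact Hx|reflexivity].
    + intros l Hl. apply H2. intros r [x [Hx ->]]. apply Hl, Hx. }
have Hz1 : forall m k, / C <= z m k.
{ intros m k. apply (proj2 (Hz m k)). intros x Hx. exact (HSlow m x Hx k). }
have HCp : 0 < / C by (apply Rinv_0_lt_compat; lra).
have Hzpos : forall m, pos_vec (z m) by (intros m k; have := Hz1 m k; lra).
have Hz2 : forall m x, Sm m x -> forall k, z m k <= x k.
{ intros m x Hx k. exact (proj1 (Hz m k) x Hx). }
have Hz3 : forall m, super f (mu m) (z m).
{ intros m. split; [apply Hzpos|]. intros k.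
  have Hmup : 0 < mu m by (have := Hmu1 m; lra).
  enough (f (z m) k / mu m <= z m k).
  { apply (Rmult_le_reg_r (/ mu m)). apply Rinv_0_lt_compat; lra.
    replace (mu m * z m k * / mu m) with (z m k) by (field; lra). exact H. }
  apply (proj2 (Hz m k)). intros x Hx.
  have Hxx : pos_vec x := proj1 (proj1 Hx).
  have H1 : f (z m) k <= f x k by (apply Hm; [apply Hzpos|exact Hxx|apply Hz2, Hx]).
  have H2 := proj2 (proj1 Hx) k.
  apply (Rmult_le_reg_r (mu m)); [lra|].
  replace (f (z m) k / mu m * mu m) with (f (z m) k) by (field; lra). lra. }
have Hz4 : forall m, z m i0 <= 1.
{ intros m. destruct (HSne m) as [x Hx]. have := Hz2 m x Hx i0. rewrite (proj2 Hx). auto. }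
have Hz5 : forall m k, z m k <= C.
{ intros m k. have := HC (z m) (super_mono (Hz3 m) (Hmu2 m)) k i0. have := Hz4 m.
  have := Hzpos m i0. nra. }
have Hz6 : forall m k, z m k <= z (S m) k.
{ intros m k. apply (proj2 (Hz (S m) k)). intros x [Hx Hx1]. apply Hz2. split; [|exact Hx1].
  apply (super_mono Hx). apply Hmu3. apply leqnSn. }
destruct (@dec_conv n (fun m k => - z m k) (- C)) as [L [HL1 [_ HL3]]].
{ intros m k. have := Hz6 m k. lra. }
{ intros m k. have := Hz5 m k. lra. }
set U := fun k => - L k.
have HU1 : forall m k, z m k <= U k by (intros m k; have := HL1 m k; unfold U; lra).
have HUpos : pos_vec U by (intros k; have := HU1 O k; have := Hzpos O k; lra).
have HUF : forall k, f U k <= lam * U k.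
{ intros k. apply (lemB _ _ (U k)); [|have := HUpos k; lra].
  intros m. replace (lam * U k + U k / INR (S m)) with (mu m * U k) by (unfold mu, Rdiv; ring).
  apply lemA; [|have := HUpos k; have := Hmu1 m; nra].
  intros eps Heps.
  destruct (HL3 (eps * / C)) as [N HN]. { apply Rmult_lt_0_compat; lra. }
  set m' := maxn m N.
  have HUz : forall j, U j <= (1 + eps) * z m' j.
  { intros j. have := HN m' (leq_maxr m N) j. have := Hz1 m' j. unfold U. nra. }
  have Hep : 0 < 1 + eps by lra.
  have H1 : f U k <= f (fun j => (1 + eps) * z m' j) k.
  { apply Hm; [exact HUpos| |exact HUz]. intros j. have := Hzpos m' j. nra. }
  rewrite (Hh _ _ Hep (Hzpos m') k) in H1.
  have H2 := proj2 (Hz3 m') k.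
  have H3 := Hmu3 m m' (leq_maxl m N).
  have H4 := HU1 m' k. have H5 := Hzpos m' k.
  have H6 : mu m' * z m' k <= mu m * U k.
  { have := Hmu1 m'. intros. apply Rmult_le_compat; lra. }
  have H7 : (1 + eps) * f (z m') k <= (1 + eps) * (mu m' * z m' k) by (apply Rmult_le_compat_l; lra).
  have H8 : (1 + eps) * (mu m' * z m' k) <= (1 + eps) * (mu m * U k) by (apply Rmult_le_compat_l; lra).
  lra. }
have Hlamp : 0 < lam.
{ have := HUF i0. have := Hp U HUpos i0. have := HUpos i0. nra. }

set F := Gdiv f lam.
set y := fun m => Nat.iter m F U.
have Hypos : forall m, pos_vec (y m) by (intros m; apply iter_pos).
have HyS : forall m k, y (S m) k = f (y m) k / lam by (intros; reflexivity).
have Hydec : forall m k, y (S m) k <= y m k.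
{ intros m. induction m as [|m IH]; intros k.
  - rewrite HyS. change (y O k) with (U k). have := HUF k.
    intros H. apply (Rmult_le_reg_r lam); [lra|].
    replace (f (y O) k / lam * lam) with (f (y O) k) by (field; lra). change (y O) with U. lra.
  - rewrite (HyS (S m)) (HyS m). unfold Rdiv. apply Rmult_le_compat_r.
    + left. apply Rinv_0_lt_compat; lra.
    + apply Hm; [apply Hypos|apply Hypos|exact IH]. }
have Hysup : forall m, super f lam (y m).
{ intros m. split; [apply Hypos|]. intros k. have := Hydec m k. rewrite HyS.
  intros H. replace (f (y m) k) with (lam * (f (y m) k / lam)) by (field; lra).
  apply Rmult_le_compat_l; lra. }
have HUlow : forall k, / C <= U k by (intros k; have := HU1 O k; have := Hz1 O k; lra).
have Hyi0 : forall m, / (2 * C * C) <= y m i0.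
{ intros m. apply Rnot_lt_le. intros Hlt.
  have Hhalf : forall k, y m k <= U k / 2.
  { intros k. have := HC (y m) (super_mono (Hysup m) (ltac:(unfold mu0; lra) : lam <= mu0)) k i0.
    have := HUlow k. intros H1 H2.
    have : C * y m i0 <= C * / (2 * C * C) by (apply Rmult_le_compat_l; lra).
    replace (C * / (2 * C * C)) with (/ C / 2) by (field; lra). lra. }
  destruct m as [|K].
  - have := Hhalf i0. have := HUpos i0. change (y O i0) with (U i0). lra.
  - set t := / (2 * INR (S K)).
    have HK1 := HINR K.
    have Ht : 0 < t <= / 2.
    { unfold t. split. apply Rinv_0_lt_compat; lra.
      apply Rinv_le_contravar; lra. }
    set nu := lam * (1 - t).
    have Hnu : 0 < nu < lam by (unfold nu; split; nra).
    have Hpw : (lam / nu) ^ (S K) <= 2.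
    { replace (lam / nu) with (/ (1 - t)) by (unfold nu; field; lra).
      rewrite pow_inv.
      have Hb := bernoulli t (S K) (ltac:(lra) : 0 <= t <= 1).
      replace (INR (S K) * t) with (/ 2) in Hb by (unfold t; field; lra).
      replace 2 with (/ / 2) by (field; lra).
      apply Rinv_le_contravar; lra. }
    have Hpw0 : 0 < (lam / nu) ^ (S K) by (apply pow_lt; apply Rdiv_lt_0_compat; lra).
    destruct (multistep (mu := nu) (x := U) (K := K) Hp Hh Hm (proj1 Hnu) HUpos) as [x Hx].
    + intros i. rewrite (iter_rel (S K) Hp Hh Hlamp (proj1 Hnu) HUpos i).
      change (Nat.iter (S K) (Gdiv f lam) U i) with (y (S K) i).
      have := Hhalf i. have := Hypos (S K) i. have := HUpos i. nra.
    + have := Hlam1 nu (conj (proj1 Hnu) (ex_intro _ x Hx)). lra. }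
set delta := / (2 * C * C * C).
have Hdelta : 0 < delta by (apply Rinv_0_lt_compat; nra).
have Hylow : forall m k, delta <= y m k.
{ intros m k. have := HC (y m) (super_mono (Hysup m) (ltac:(unfold mu0; lra) : lam <= mu0)) i0 k.
  have := Hyi0 m. intros H1 H2.
  apply (Rmult_le_reg_l C); [lra|].
  replace (C * delta) with (/ (2 * C * C)) by (unfold delta; field; lra). lra. }
destruct (@dec_conv n y delta Hydec Hylow) as [L' [HL'1 [HL'2 HL'3]]].
have HL'low : forall k, delta <= L' k by (intros k; apply HL'2; intros m; apply Hylow).
have HL'pos : pos_vec L' by (intros k; have := HL'low k; lra).
have HFL1 : forall k, f L' k / lam <= L' k.
{ intros k. apply HL'2. intros m. apply (Rle_trans _ (y (S m) k)); [|apply Hydec]. rewrite HyS. unfold Rdiv.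
  apply Rmult_le_compat_r; [left; apply Rinv_0_lt_compat; lra|].
  apply Hm; [exact HL'pos|apply Hypos|]. intros j. apply HL'1. }
have HFL2 : forall k, L' k <= f L' k / lam.
{ intros k. apply lemA; [|have := Hp L' HL'pos k; intros; left; apply Rdiv_lt_0_compat; lra].
  intros eps Heps.
  destruct (HL'3 (eps * delta)) as [N HN]. { apply Rmult_lt_0_compat; lra. }
  have Hyl : forall j, y N j <= (1 + eps) * L' j.
  { intros j. have := HN N (leqnn N) j. have := HL'low j. nra. }
  have Hep : 0 < 1 + eps by lra.
  have H1 : f (y N) k <= f (fun j => (1 + eps) * L' j) k.
  { apply Hm; [apply Hypos| |exact Hyl]. intros j. have := HL'pos j. nra. }
  rewrite (Hh _ _ Hep HL'pos k) in H1.
  have H2 := HL'1 (S N) k. rewrite HyS in H2.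
  have H3 : f (y N) k / lam <= (1 + eps) * f L' k / lam.
  { unfold Rdiv. apply Rmult_le_compat_r; [left; apply Rinv_0_lt_compat; lra|lra]. }
  replace ((1 + eps) * (f L' k / lam)) with ((1 + eps) * f L' k / lam) by (field; lra). lra. }
exists L', lam. split; [exact HL'pos|split; [exact Hlamp|]].
intros k. have := HFL1 k. have := HFL2 k. intros H1 H2.
have : f L' k / lam = L' k by lra.
intros H. rewrite -H. field. lra.
Qed.

Unset Implicit Arguments.

Theorem theorem2 (n : nat) (f : ('I_n -> R) -> ('I_n -> R)) :
  maps_pos f -> homogeneous f -> monotone f ->
  strongly_connected (graph_edge f) ->
  exists (x : 'I_n -> R) (lam : R),
    pos_vec x /\ 0 < lam /\ forall i, f x i = lam * x i.
Proof.
intros Hp Hh Hm Hsc. destruct n as [|n'].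
- exists (fun _ => 1), 1. split; [intros i; by case: i|split; [lra|intros i; by case: i]].
- exact (main ord0 Hp Hh Hm Hsc).
Qed.
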